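(* Let $n\ge 4$ and for $j=1,\ldots,n-1$ let $\xi_j\in\mathbb R^{n-1}$ be the vector whose $i$-th entry ($i=1,\ldots,n-1$) is $\cos\frac{(i-1)(2j-1)\pi}{2(n-1)}$; let $e$ be the all-ones vector of length $n-1$. If $n\not\equiv 0\pmod 4$, then $\prod_{j=1}^{n-1}e^{T}\xi_j=\pm 2^{1-\lceil n/2\rceil}\neq 0$. If $n\equiv 0\pmod 4$, then $e^{T}\xi_{n/2}=0$ and $e^{T}\xi_j\neq 0$ for every $j\in\{1,\ldots,n-1\}\setminus\{n/2\}$. *)

(* Defs.v *)
From Stdlib Require Import Reals Lra Lia Arith.
Open Scope R_scope.

Definition xi (n j i : nat) : R :=
  cos (INR (i - 1) * INR (2 * j - 1) * PI / (2 * INR (n - 1))).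

Definition eTxi (n j : nat) : R :=
  sum_f 1 (n - 1) (fun i => xi n j i).

Fixpoint prod_from1 (m : nat) (f : nat -> R) : R :=
  match m with
  | O => 1
  | S k => prod_from1 k f * f (S k)
  end.

Definition ceil_half (n : nat) : nat := Nat.div (n + 1) 2.

(* Main.v *)
Require Import Defs.
From Stdlib Require Import Reals Lra Lia Arith.
Open Scope R_scope.

Lemma P_ext a f g : (forall k, (1 <= k <= a)%nat -> f k = g k) ->
  prod_from1 a f = prod_from1 a g.
Proof.
  induction a; intros H; simpl; auto.
  rewrite IHa by (intros; apply H; lia). rewrite H by lia. reflexivity.
Qed.

Lemma P_mul a f g : prod_from1 a (fun k => f k * g k) = prod_from1 a f * prod_from1 a g.
Proof. induction a; simpl. ring. rewrite IHa; ring. Qed.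

Lemma P_split a b f : prod_from1 (a + b) f =
  prod_from1 a f * prod_from1 b (fun i => f (a + i)%nat).
Proof.
  induction b; simpl.
  - rewrite Nat.add_0_r; ring.
  - rewrite <- plus_n_Sm; simpl. rewrite IHb; ring.
Qed.

Lemma P_rev a f : prod_from1 a f = prod_from1 a (fun i => f (a + 1 - i)%nat).
Proof.
  revert f; induction a; intros f; auto.
  transitivity (prod_from1 a f * f (S a)); [reflexivity|].
  pose proof (P_split 1 a (fun i => f (S a + 1 - i)%nat)) as E.
  replace (1 + a)%nat with (S a) in E by lia. rewrite E. clear E.
  simpl prod_from1 at 2.
  rewrite (IHa (fun i => f (S a + 1 - (1 + i))%nat)).
  rewrite (P_ext a (fun i => f (S a + 1 - (1 + (a + 1 - i)))%nat) f).
  - replace (a + 1 - 0)%nat with (S a) by lia. ring.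
  - intros k Hk. f_equal. lia.
Qed.

Lemma P_abs a f : Rabs (prod_from1 a f) = prod_from1 a (fun k => Rabs (f k)).
Proof. induction a; simpl. apply Rabs_R1. rewrite Rabs_mult, IHa; auto. Qed.

Lemma P_const a c : prod_from1 a (fun _ => c) = c ^ a.
Proof. induction a; simpl. auto. rewrite IHa; ring. Qed.

Lemma P_pos a f : (forall k, (1 <= k <= a)%nat -> 0 < f k) -> 0 < prod_from1 a f.
Proof.
  induction a; intros H; simpl. lra.
  apply Rmult_lt_0_compat. apply IHa; intros; apply H; lia. apply H; lia.
Qed.

Lemma P_evenodd g f : prod_from1 (2 * g) f =
  prod_from1 g (fun i => f (2 * i)%nat) * prod_from1 g (fun i => f (2 * i - 1)%nat).
Proof.
  induction g. simpl. ring.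
  replace (2 * S g)%nat with (S (S (2 * g))) by lia.
  transitivity (prod_from1 (2 * g) f * f (S (2 * g)) * f (S (S (2 * g)))); [reflexivity|].
  transitivity ((prod_from1 g (fun i => f (2 * i)%nat) * f (2 * S g)%nat) *
    (prod_from1 g (fun i => f (2 * i - 1)%nat) * f (2 * S g - 1)%nat)); [|reflexivity].
  rewrite IHg.
  replace (2 * S g - 1)%nat with (S (2 * g)) by lia.
  replace (2 * S g)%nat with (S (S (2 * g))) by lia. ring.
Qed.

Definition al (m j : nat) : R := INR (2 * j - 1) * PI / (4 * INR m).
Definition sg (j : nat) : R := (-1) ^ (j - 1).

Lemma sum_cos th N : 2 * sin (th / 2) * sum_f_R0 (fun x => cos (INR x * th)) N =
  sin ((2 * INR N + 1) * th / 2) + sin (th / 2).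
Proof.
  induction N.
  - simpl. replace (0 * th) with 0 by ring. rewrite cos_0.
    replace ((2 * 0 + 1) * th / 2) with (th / 2) by field. ring.
  - cbn [sum_f_R0]. rewrite Rmult_plus_distr_l, IHN. rewrite S_INR.
    replace ((2 * (INR N + 1) + 1) * th / 2) with ((INR N + 1) * th + th / 2) by field.
    replace ((2 * INR N + 1) * th / 2) with ((INR N + 1) * th - th / 2) by field.
    rewrite sin_plus, sin_minus. ring.
Qed.

Lemma cos_sub_kPI a k : cos (a - INR k * PI) = (-1) ^ k * cos a.
Proof.
  induction k.
  - simpl. replace (a - 0 * PI) with a by ring. ring.
  - rewrite S_INR. replace (a - (INR k + 1) * PI) with ((a - INR k * PI) - PI) by ring.
    rewrite cos_minus, cos_PI, sin_PI, IHk. simpl. ring.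
Qed.

Lemma INR_odd j : (1 <= j)%nat -> INR (2 * j - 1) = 2 * INR j - 1.
Proof.
  intros H. rewrite minus_INR by lia. rewrite mult_INR. simpl. ring.
Qed.

Lemma al_bounds m j : (1 <= m)%nat -> (1 <= j <= m)%nat -> 0 < al m j < PI / 2.
Proof.
  intros Hm Hj. unfold al. rewrite INR_odd by lia.
  assert (1 <= INR j) by (replace 1 with (INR 1) by reflexivity; apply le_INR; lia).
  assert (INR j <= INR m) by (apply le_INR; lia).
  pose proof PI_RGT_0.
  split.
  - apply Rmult_lt_0_compat. apply Rmult_lt_0_compat; lra. apply Rinv_0_lt_compat; lra.
  - apply (Rmult_lt_reg_r (4 * INR m)). lra.
    field_simplify; try lra. nra.
Qed.

Lemma F_form n j : (4 <= n)%nat -> (1 <= j <= n - 1)%nat ->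
  2 * sin (al (n - 1) j) * eTxi n j = sin (al (n - 1) j) + sg j * cos (al (n - 1) j).
Proof.
  intros Hn Hj. set (m := (n - 1)%nat) in *.
  assert (Hm : 3 <= INR m) by (replace 3 with (INR 3) by (simpl; ring); apply le_INR; lia).
  assert (E : eTxi n j = sum_f_R0 (fun x => cos (INR x * (2 * al m j))) (m - 1)).
  { unfold eTxi, sum_f, xi. apply sum_eq. intros i _. f_equal.
    replace (i + 1 - 1)%nat with i by lia. unfold al. fold m. field. lra. }
  rewrite E. replace (al m j) with (2 * al m j / 2) at 1 2 by field.
  rewrite sum_cos. replace (2 * al m j / 2) with (al m j) by field.
  rewrite minus_INR by lia. simpl INR.
  replace ((2 * (INR m - 1) + 1) * (2 * al m j) / 2) with
    (PI / 2 - (al m j - INR (j - 1) * PI)).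
  - rewrite sin_shift, cos_sub_kPI. unfold sg. ring.
  - unfold al. rewrite INR_odd by lia. rewrite minus_INR by lia. simpl INR. field. lra.
Qed.

Lemma m1pow_pm k : (-1) ^ k = 1 \/ (-1) ^ k = -1.
Proof. induction k; simpl. auto. destruct IHk as [H|H]; rewrite H; [right|left]; ring. Qed.

Lemma m1pow_sq k : (-1) ^ k * (-1) ^ k = 1.
Proof. destruct (m1pow_pm k) as [H|H]; rewrite H; ring. Qed.

Lemma sg_pair m j : (1 <= j <= m)%nat -> sg (m + 1 - j) = (-1) ^ (m - 1) * sg j.
Proof.
  intros H. unfold sg. replace (m - 1)%nat with ((m + 1 - j - 1) + (j - 1))%nat by lia.
  rewrite pow_add. rewrite Rmult_assoc, m1pow_sq. ring.
Qed.

Lemma al_pair m j : (1 <= m)%nat -> (1 <= j <= m)%nat -> al m (m + 1 - j) = PI / 2 - al m j.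
Proof.
  intros Hm Hj. unfold al. rewrite !INR_odd by lia. rewrite minus_INR by lia.
  rewrite plus_INR. simpl INR.
  assert (0 < INR m) by (apply lt_0_INR; lia). field. lra.
Qed.

Lemma sin_al_pos m j : (1 <= m)%nat -> (1 <= j <= m)%nat -> 0 < sin (al m j).
Proof. intros. pose proof (al_bounds m j H H0). apply sin_gt_0; lra. Qed.
Lemma cos_al_pos m j : (1 <= m)%nat -> (1 <= j <= m)%nat -> 0 < cos (al m j).
Proof. intros. pose proof (al_bounds m j H H0). apply cos_gt_0; lra. Qed.

Lemma F_expl n j : (4 <= n)%nat -> (1 <= j <= n - 1)%nat ->
  eTxi n j = (sin (al (n - 1) j) + sg j * cos (al (n - 1) j)) / (2 * sin (al (n - 1) j)).
Proof.
  intros Hn Hj. pose proof (F_form n j Hn Hj). pose proof (sin_al_pos (n-1) j ltac:(lia) Hj).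
  rewrite <- H. field. lra.
Qed.

Lemma pair_gen n j e : (4 <= n)%nat -> (1 <= j <= n - 1)%nat ->
  (-1) ^ (n - 1 - 1) = e ->
  eTxi n j * eTxi n (n - 1 + 1 - j) =
  (sin (al (n-1) j) + sg j * cos (al (n-1) j)) * (cos (al (n-1) j) + e * sg j * sin (al (n-1) j))
  / (4 * sin (al (n-1) j) * cos (al (n-1) j)).
Proof.
  intros Hn Hj He.
  assert (Hj' : (1 <= n - 1 + 1 - j <= n - 1)%nat) by lia.
  rewrite (F_expl n j Hn Hj), (F_expl n _ Hn Hj').
  rewrite al_pair by lia. rewrite sg_pair by lia. rewrite He.
  rewrite sin_shift, cos_shift.
  pose proof (sin_al_pos (n-1) j ltac:(lia) Hj). pose proof (cos_al_pos (n-1) j ltac:(lia) Hj).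
  field. lra.
Qed.

Lemma fold_pairs h F : prod_from1 (h + h) F = prod_from1 h (fun j => F j * F (h + h + 1 - j)%nat).
Proof.
  rewrite P_split, P_mul. f_equal. rewrite (P_rev h (fun i => F (h + i)%nat)).
  apply P_ext. intros k Hk. f_equal. lia.
Qed.

Lemma x_small m j : (1 <= m)%nat -> (1 <= j)%nat -> (2 * j - 1 < m)%nat ->
  0 < 2 * al m j < PI / 2.
Proof.
  intros Hm Hj H. unfold al. rewrite INR_odd by lia.
  assert (1 <= INR j) by (replace 1 with (INR 1) by reflexivity; apply le_INR; lia).
  assert (2 * INR j - 1 + 1 <= INR m).
  { replace (2 * INR j - 1 + 1) with (INR (2 * j)) by (rewrite mult_INR; simpl; ring).
    apply le_INR; lia. }
  pose proof PI_RGT_0. split.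
  - apply Rmult_lt_0_compat; [lra|].
    apply Rmult_lt_0_compat. apply Rmult_lt_0_compat; lra. apply Rinv_0_lt_compat; lra.
  - apply (Rmult_lt_reg_r (4 * INR m)). lra.
    field_simplify; try lra. nra.
Qed.

Lemma case_modd h : (2 <= h)%nat ->
  Rabs (prod_from1 (2 * h + 1 - 1) (fun j => eTxi (2 * h + 1) j)) = (/ 2) ^ h.
Proof.
  intros Hh. set (n := (2 * h + 1)%nat).
  replace (n - 1)%nat with (h + h)%nat by (unfold n; lia).
  rewrite fold_pairs, P_abs.
  set (x := fun j => 2 * al (h + h) j).
  assert (Hx : forall j, (1 <= j <= h)%nat -> 0 < x j < PI / 2).
  { intros j Hj. apply x_small; lia. }
  assert (Hsin : forall j, (1 <= j <= h)%nat -> 0 < sin (x j)).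
  { intros j Hj. specialize (Hx j Hj). apply sin_gt_0; lra. }
  assert (Hcos : forall j, (1 <= j <= h)%nat -> 0 < cos (x j)).
  { intros j Hj. specialize (Hx j Hj). apply cos_gt_0; lra. }
  rewrite (P_ext h _ (fun j => cos (x j) * (/ 2 * / sin (x j)))).
  2:{ intros j Hj.
      assert (Hj' : (1 <= j <= n - 1)%nat) by (unfold n; lia).
      assert (Hn : (4 <= n)%nat) by (unfold n; lia).
      replace (h + h + 1 - j)%nat with (n - 1 + 1 - j)%nat by (unfold n; lia).
      rewrite (pair_gen n j (-1) Hn Hj').
      2:{ replace (n - 1 - 1)%nat with (S (2 * (h - 1))) by (unfold n; lia). apply pow_1_odd. }
      replace (n - 1)%nat with (h + h)%nat by (unfold n; lia).
      pose proof (Hsin j Hj) as S1. pose proof (Hcos j Hj) as C1.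
      unfold x in *. set (a := al (h + h) j) in *.
      rewrite sin_2a in *. rewrite cos_2a_cos in *.
      pose proof (sin_al_pos (h+h) j ltac:(lia) ltac:(lia)) as S2.
      pose proof (cos_al_pos (h+h) j ltac:(lia) ltac:(lia)) as C2.
      fold a in S2, C2.
      assert (sin a * sin a = 1 - cos a * cos a) by (pose proof (sin2_cos2 a); unfold Rsqr in *; lra).
      assert (Hs : sg j * sg j = 1) by apply m1pow_sq.
      replace ((sin a + sg j * cos a) * (cos a + -1 * sg j * sin a)) with
        (sg j * (2 * cos a * cos a - 1)).
      2:{ replace (2 * cos a * cos a - 1) with (cos a * cos a - sin a * sin a) by lra.
          transitivity ((1 - sg j * sg j) * (sin a * cos a) + sg j * (cos a * cos a - sin a * sin a)); [rewrite Hs; ring | ring]. }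
      unfold Rdiv. rewrite !Rabs_mult, Rabs_inv.
      rewrite (Rabs_right (2 * cos a * cos a - 1)) by lra.
      rewrite (Rabs_right (4 * sin a * cos a)) by nra.
      destruct (m1pow_pm (j - 1)) as [E|E]; unfold sg; rewrite E;
        [rewrite Rabs_R1 | replace (Rabs (-1)) with 1 by (rewrite Rabs_left; lra)]; field; nra. }
  rewrite !P_mul, P_const.
  assert (E : prod_from1 h (fun j => cos (x j)) = prod_from1 h (fun j => sin (x j))).
  { rewrite P_rev. apply P_ext. intros k Hk. unfold x.
    replace (2 * al (h + h) (h + 1 - k)) with (PI / 2 - 2 * al (h + h) k).
    { apply cos_shift. }
    unfold al. rewrite !INR_odd by lia. rewrite minus_INR by lia. rewrite !plus_INR. simpl INR.
    assert (0 < INR h) by (apply lt_0_INR; lia). field. lra. }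
  rewrite E.
  assert (I : prod_from1 h (fun j => sin (x j)) * prod_from1 h (fun j => / sin (x j)) = 1).
  { rewrite <- P_mul. rewrite (P_ext h _ (fun _ => 1)). rewrite P_const. apply pow1.
    intros k Hk. specialize (Hsin k Hk). field. lra. }
  transitivity ((/ 2) ^ h * (prod_from1 h (fun j => sin (x j)) * prod_from1 h (fun j => / sin (x j)))); [ring|].
  rewrite I. ring.
Qed.

Lemma P_inv a f : (forall k, (1 <= k <= a)%nat -> f k <> 0) ->
  prod_from1 a (fun k => / f k) = / prod_from1 a f.
Proof.
  induction a; intros H; simpl. field.
  rewrite IHa by (intros; apply H; lia). rewrite Rinv_mult. reflexivity.
Qed.

Section S.
Variable g : nat.
Hypothesis Hg : (1 <= g)%nat.
Let m := (4 * g + 1)%nat.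
Definition cm k := cos (INR k * PI / INR m).
Definition sm k := sin (INR k * PI / INR m).

Lemma INRm : INR m = 4 * INR g + 1.
Proof. unfold m. rewrite plus_INR, mult_INR. simpl. ring. Qed.

Lemma ang_bounds k : (k <= 2 * g)%nat -> 0 <= INR k * PI / INR m < PI / 2.
Proof.
  intros Hk. rewrite INRm. assert (0 <= INR k) by apply pos_INR.
  assert (INR k <= 2 * INR g) by (replace (2 * INR g) with (INR (2 * g)) by (rewrite mult_INR; simpl; ring); apply le_INR; lia).
  pose proof PI_RGT_0. assert (0 <= INR g) by apply pos_INR.
  split.
  - apply Rmult_le_pos; [nra|]. apply Rlt_le, Rinv_0_lt_compat; lra.
  - apply (Rmult_lt_reg_r (4 * INR g + 1)). lra. field_simplify; try lra. nra.
Qed.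

Lemma cm_pos k : (k <= 2 * g)%nat -> 0 < cm k.
Proof. intros. pose proof (ang_bounds k H). apply cos_gt_0; unfold cm; lra. Qed.
Lemma sm_pos k : (1 <= k <= 2 * g)%nat -> 0 < sm k.
Proof.
  intros. pose proof (ang_bounds k ltac:(lia)). unfold sm. apply sin_gt_0; [|lra].
  assert (0 < INR k) by (apply lt_0_INR; lia). rewrite INRm in *.
  assert (0 <= INR g) by apply pos_INR. pose proof PI_RGT_0.
  apply Rmult_lt_0_compat; [nra|]. apply Rinv_0_lt_compat; lra.
Qed.

Lemma classical : prod_from1 (2 * g) cm = (/ 2) ^ (2 * g).
Proof.
  assert (Hs : 0 < prod_from1 (2 * g) sm) by (apply P_pos; intros; apply sm_pos; lia).
  assert (E : prod_from1 (2 * g) cm * prod_from1 (2 * g) sm = (/ 2) ^ (2 * g) * prod_from1 (2 * g) sm).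
  { rewrite <- P_mul. rewrite (P_ext _ _ (fun k => / 2 * sm (2 * k))).
    2:{ intros k Hk. unfold cm, sm. rewrite mult_INR. simpl INR.
        replace ((1 + 1) * INR k * PI / INR m) with (2 * (INR k * PI / INR m)) by (field; rewrite INRm; pose proof (pos_INR g); lra).
        rewrite sin_2a. field. }
    rewrite P_mul, P_const. f_equal.
    replace (2 * g)%nat with (g + g)%nat at 1 by lia.
    rewrite P_split. rewrite (P_rev g (fun i => sm (2 * (g + i)))).
    rewrite (P_ext g (fun i => sm (2 * (g + (g + 1 - i))))%nat (fun i => sm (2 * i - 1)%nat)).
    - symmetry. apply P_evenodd.
    - intros i Hi. unfold sm. rewrite <- sin_PI_x. f_equal.
      rewrite !mult_INR, !minus_INR by lia. rewrite !plus_INR, !mult_INR, !minus_INR by lia.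
      rewrite ?plus_INR. rewrite INRm. simpl INR. field. pose proof (pos_INR g); lra. }
  apply (Rmult_eq_reg_r (prod_from1 (2 * g) sm)); lra.
Qed.

Lemma mid : eTxi (4 * g + 2) (2 * g + 1) = 1.
Proof.
  rewrite F_expl by lia. replace (4 * g + 2 - 1)%nat with m by (unfold m; lia).
  replace (al m (2 * g + 1)) with (PI / 4).
  - unfold sg. replace (2 * g + 1 - 1)%nat with (2 * g)%nat by lia. rewrite pow_1_even.
    rewrite sin_PI4, cos_PI4. assert (0 < sqrt 2) by (apply sqrt_lt_R0; lra). field. lra.
  - unfold al. rewrite INR_odd by lia. rewrite plus_INR, mult_INR, INRm. simpl INR.
    field. pose proof (pos_INR g); lra.
Qed.

Lemma cm_odd i : (1 <= i <= g)%nat -> cm (2 * i - 1) = 1 - 2 * cm (2 * g + 1 - i) * cm (2 * g + 1 - i).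
Proof.
  intros Hi. set (z := INR (2 * i - 1) * PI / (2 * INR m)).
  assert (E1 : cm (2 * i - 1) = cos (2 * z)).
  { unfold cm, z. f_equal. field. rewrite INRm. pose proof (pos_INR g); lra. }
  assert (E2 : cm (2 * g + 1 - i) = sin z).
  { unfold cm, z. rewrite <- cos_shift. f_equal. rewrite !minus_INR by lia.
    rewrite !plus_INR, !mult_INR, INRm. simpl INR. field. pose proof (pos_INR g); lra. }
  rewrite E1, E2, cos_2a_sin. ring.
Qed.

Definition Q k := (cm k + (-1) ^ k) / (2 * cm k).

Lemma case_m1 : Rabs (prod_from1 (4 * g + 2 - 1) (fun j => eTxi (4 * g + 2) j)) = (/ 2) ^ (2 * g).
Proof.
  set (n := (4 * g + 2)%nat).
  assert (Hn : (4 <= n)%nat) by (unfold n; lia).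
  replace (n - 1)%nat with (2 * g + (1 + 2 * g))%nat by (unfold n; lia).
  rewrite P_split, P_split.
  change (prod_from1 1 (fun i => eTxi n (2 * g + i)%nat)) with (1 * eTxi n (2 * g + 1)%nat).
  unfold n at 2. rewrite mid.
  rewrite (P_rev (2 * g) (fun i => eTxi n (2 * g + (1 + i)))%nat).
  replace (1 * 1 * prod_from1 (2 * g) (fun i => eTxi n (2 * g + (1 + (2 * g + 1 - i))))%nat)
    with (prod_from1 (2 * g) (fun i => eTxi n (n - 1 + 1 - i))%nat).
  2:{ rewrite Rmult_1_l, Rmult_1_l. apply P_ext. intros k Hk. f_equal. unfold n; lia. }
  rewrite <- P_mul. rewrite P_rev.
  rewrite (P_ext (2 * g) _ Q).
  2:{ intros k Hk. set (j := (2 * g + 1 - k)%nat).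
      assert (Hj : (1 <= j <= n - 1)%nat) by (unfold j, n; lia).
      rewrite (pair_gen n j 1 Hn Hj).
      2:{ replace (n - 1 - 1)%nat with (2 * (2 * g))%nat by (unfold n; lia). apply pow_1_even. }
      replace (n - 1)%nat with m by (unfold n, m; lia).
      assert (E1 : 2 * al m j = PI / 2 - INR k * PI / INR m).
      { unfold al, j. rewrite INR_odd by lia. rewrite minus_INR by lia. rewrite !plus_INR, !mult_INR, INRm.
        simpl INR. field. pose proof (pos_INR g); lra. }
      assert (E2 : sg j = (-1) ^ k).
      { unfold sg. replace (j - 1)%nat with (2 * g - k)%nat by (unfold j; lia).
        pose proof (m1pow_sq k) as Hsq.
        assert (Hp : (-1) ^ (2 * g - k) * (-1) ^ k = 1).
        { rewrite <- pow_add. replace (2 * g - k + k)%nat with (2 * g)%nat by lia. apply pow_1_even. }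
        transitivity ((-1) ^ (2 * g - k) * ((-1) ^ k * (-1) ^ k)); [rewrite Hsq; ring|].
        rewrite <- Rmult_assoc, Hp. ring. }
      assert (Ec : cm k = sin (2 * al m j)) by (rewrite E1, sin_shift; reflexivity).
      unfold Q. rewrite Ec, <- E2, sin_2a.
      pose proof (sin_al_pos m j ltac:(unfold m; lia) ltac:(unfold j, m; lia)) as S2.
      pose proof (cos_al_pos m j ltac:(unfold m; lia) ltac:(unfold j, m; lia)) as C2.
      set (a := al m j) in *.
      assert (sin a * sin a + cos a * cos a = 1) by (pose proof (sin2_cos2 a); unfold Rsqr in *; lra).
      assert (Hs : sg j * sg j = 1) by apply m1pow_sq.
      replace ((sin a + sg j * cos a) * (cos a + 1 * sg j * sin a)) with
        (2 * sin a * cos a + sg j).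
      { field. lra. }
      transitivity ((1 + sg j * sg j) * (sin a * cos a) + sg j * (sin a * sin a + cos a * cos a));
        [rewrite Hs, H; ring | ring]. }
  rewrite P_abs, P_evenodd.
  rewrite (P_ext g _ (fun i => cm i * cm i * / cm (2 * i)%nat)).
  2:{ intros i Hi. unfold Q. rewrite pow_1_even.
      pose proof (cm_pos (2 * i) ltac:(lia)) as P2.
      unfold cm at 1 2. rewrite mult_INR. simpl INR.
      replace ((1 + 1) * INR i * PI / INR m) with (2 * (INR i * PI / INR m))
        by (field; rewrite INRm; pose proof (pos_INR g); lra).
      rewrite cos_2a_cos. fold (cm i).
      replace (cos (2 * (INR i * PI / INR m))) with (cm (2 * i)%nat) in P2
        by (unfold cm; f_equal; rewrite mult_INR; simpl INR; field; rewrite INRm; pose proof (pos_INR g); lra).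
      rewrite <- (Rabs_right (cm i * cm i * / cm (2 * i)%nat)).
      2:{ apply Rle_ge. apply Rmult_le_pos. nra. apply Rlt_le, Rinv_0_lt_compat; lra. }
      f_equal. unfold cm. rewrite mult_INR. simpl INR.
      replace ((1 + 1) * INR i * PI / INR m) with (2 * (INR i * PI / INR m))
        by (field; rewrite INRm; pose proof (pos_INR g); lra).
      rewrite cos_2a_cos. fold (cm i). unfold cm in P2.
      rewrite mult_INR in P2. simpl INR in P2.
      replace ((1 + 1) * INR i * PI / INR m) with (2 * (INR i * PI / INR m)) in P2
        by (field; rewrite INRm; pose proof (pos_INR g); lra).
      rewrite cos_2a_cos in P2. fold (cm i) in P2. field. lra. }
  rewrite (P_ext g (fun i => Rabs (Q (2 * i - 1)%nat)) (fun i => cm (2 * g + 1 - i)%nat * cm (2 * g + 1 - i)%nat * / cm (2 * i - 1)%nat)).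
  2:{ intros i Hi. unfold Q.
      replace ((-1) ^ (2 * i - 1)) with (-1) by (replace (2 * i - 1)%nat with (S (2 * (i - 1))) by lia; symmetry; apply pow_1_odd).
      pose proof (cm_pos (2 * i - 1) ltac:(lia)) as P2.
      pose proof (cm_odd i Hi) as E. 
      rewrite <- (Rabs_right (cm (2 * g + 1 - i)%nat * cm (2 * g + 1 - i)%nat * / cm (2 * i - 1)%nat)).
      2:{ apply Rle_ge. apply Rmult_le_pos. nra. apply Rlt_le, Rinv_0_lt_compat; lra. }
      replace ((cm (2 * i - 1) + -1) / (2 * cm (2 * i - 1)))
        with (- (cm (2 * g + 1 - i)%nat * cm (2 * g + 1 - i)%nat * / cm (2 * i - 1)%nat)).
      { apply Rabs_Ropp. }
      rewrite E in *. field. lra. }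
  assert (HC := classical).
  assert (Hpos : forall i, (1 <= i <= g)%nat -> 0 < cm (2 * i) /\ 0 < cm (2 * i - 1)).
  { intros i Hi. split; apply cm_pos; lia. }
  rewrite !P_mul, !P_inv by (intros i Hi; destruct (Hpos i Hi); lra).
  rewrite P_evenodd in HC.
  assert (AB : prod_from1 g cm * prod_from1 g (fun i => cm (2 * g + 1 - i)%nat) = (/ 2) ^ (2 * g)).
  { rewrite <- classical. replace (prod_from1 (2 * g) cm) with (prod_from1 (g + g) cm) by (f_equal; lia).
    rewrite P_split. f_equal. rewrite (P_rev g (fun i => cm (g + i)%nat)). apply P_ext.
    intros k Hk. f_equal. lia. }
  assert (0 < prod_from1 g (fun i => cm (2 * i)%nat)) by (apply P_pos; intros; apply cm_pos; lia).
  assert (0 < prod_from1 g (fun i => cm (2 * i - 1)%nat)) by (apply P_pos; intros; apply cm_pos; lia).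
  assert (0 < (/ 2) ^ (2 * g)) by (apply pow_lt; lra).
  set (A := prod_from1 g cm) in *. set (B := prod_from1 g (fun k => cm (2 * g + 1 - k)%nat)) in *.
  set (Ev := prod_from1 g (fun k => cm (2 * k)%nat)) in *.
  set (Od := prod_from1 g (fun k => cm (2 * k - 1)%nat)) in *.
  transitivity ((A * B) * (A * B) / (Ev * Od)); [field; lra|].
  rewrite AB, HC. field. lra.
Qed.
End S.

Lemma pow_half k : powerRZ 2 (1 - Z.of_nat (k + 1)) = (/ 2) ^ k.
Proof.
  replace (1 - Z.of_nat (k + 1))%Z with (- Z.of_nat k)%Z by lia.
  rewrite powerRZ_neg', <- pow_powerRZ, pow_inv. reflexivity.
Qed.

Lemma ceil_odd h : ceil_half (2 * h + 1) = (h + 1)%nat.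
Proof. unfold ceil_half. symmetry. apply (Nat.div_unique _ _ _ 0); lia. Qed.
Lemma ceil_2 g : ceil_half (4 * g + 2) = (2 * g + 1)%nat.
Proof. unfold ceil_half. symmetry. apply (Nat.div_unique _ _ _ 1); lia. Qed.

Lemma part1 n : (4 <= n)%nat -> Nat.modulo n 4 <> 0%nat ->
  Rabs (prod_from1 (n - 1) (fun j => eTxi n j)) = powerRZ 2 (1 - Z.of_nat (ceil_half n)).
Proof.
  intros Hn Hm.
  pose proof (Nat.div_mod_eq n 4) as D. pose proof (Nat.mod_upper_bound n 4 ltac:(lia)) as U.
  set (q := Nat.div n 4) in *. set (r := Nat.modulo n 4) in *. clearbody q r.
  assert (r = 1 \/ r = 2 \/ r = 3)%nat as [R|[R|R]] by lia.
  - set (h := (2 * q)%nat). assert (En : n = (2 * h + 1)%nat) by (unfold h; lia). clearbody h. rewrite En.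
    rewrite ceil_odd, pow_half. apply case_modd. lia.
  - subst r. assert (En : n = (4 * q + 2)%nat) by lia. rewrite En.
    rewrite ceil_2. replace (2 * q + 1)%nat with (2 * q + 1)%nat by reflexivity.
    rewrite pow_half. apply case_m1. lia.
  - set (h := (2 * q + 1)%nat). assert (En : n = (2 * h + 1)%nat) by (unfold h; lia). clearbody h. rewrite En.
    rewrite ceil_odd, pow_half. apply case_modd. lia.
Qed.

Lemma part2 n : (4 <= n)%nat -> Nat.modulo n 4 = 0%nat ->
  eTxi n (Nat.div n 2) = 0 /\
  forall j : nat, (1 <= j <= n - 1)%nat -> j <> Nat.div n 2 -> eTxi n j <> 0.
Proof.
  intros Hn Hm.
  pose proof (Nat.div_mod_eq n 4) as D. set (t := Nat.div n 4) in *.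
  assert (Hn4 : n = (4 * t)%nat) by lia.
  assert (H2 : Nat.div n 2 = (2 * t)%nat) by (symmetry; apply (Nat.div_unique _ _ _ 0); lia).
  rewrite H2. set (m := (n - 1)%nat).
  assert (Hm0 : 0 < INR m) by (apply lt_0_INR; unfold m; lia).
  pose proof PI_RGT_0.
  split.
  - rewrite F_expl by lia. fold m.
    replace (al m (2 * t)) with (PI / 4).
    2:{ unfold al. replace (2 * (2 * t) - 1)%nat with m by (unfold m; lia). field. lra. }
    unfold sg. replace (2 * t - 1)%nat with (S (2 * (t - 1))) by lia. rewrite pow_1_odd.
    rewrite sin_PI4, cos_PI4. field. assert (0 < sqrt 2) by (apply sqrt_lt_R0; lra). lra.
  - intros j Hj Hne HF.
    pose proof (F_form n j Hn Hj) as F. rewrite HF in F. fold m in F.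
    pose proof (al_bounds m j ltac:(unfold m; lia) Hj) as B.
    pose proof (sin_al_pos m j ltac:(unfold m; lia) Hj) as S.
    pose proof (cos_al_pos m j ltac:(unfold m; lia) Hj) as C.
    set (a := al m j) in *.
    destruct (m1pow_pm (j - 1)) as [E|E]; unfold sg in F; rewrite E in F; [lra|].
    assert (SC : sin a = cos a) by lra.
    destruct (Rtotal_order a (PI / 4)) as [L|[L|L]].
    + assert (sin a < sin (PI / 2 - a)) by (apply sin_increasing_1; lra).
      rewrite sin_shift in H0. lra.
    + apply Hne. apply INR_eq.
      assert (INR (2 * j - 1) * PI = INR m * PI).
      { transitivity (a * (4 * INR m)). unfold a, al. field. lra. rewrite L. field. }
      apply Rmult_eq_reg_r in H0; [|lra].
      apply INR_eq in H0. rewrite mult_INR. f_equal. unfold m in H0. simpl. lia.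
    + assert (sin (PI / 2 - a) < sin a) by (apply sin_increasing_1; lra).
      rewrite sin_shift in H0. lra.
Qed.

Theorem lemma4p3 (n : nat) (hn : (4 <= n)%nat) :
  (Nat.modulo n 4 <> 0%nat ->
     (exists s : R, (s = 1 \/ s = -1) /\
        prod_from1 (n - 1) (fun j => eTxi n j) = s * powerRZ 2 (1 - Z.of_nat (ceil_half n))%Z)
     /\ prod_from1 (n - 1) (fun j => eTxi n j) <> 0)
  /\
  (Nat.modulo n 4 = 0%nat ->
     eTxi n (Nat.div n 2) = 0 /\
     forall j : nat, (1 <= j <= n - 1)%nat -> j <> Nat.div n 2 -> eTxi n j <> 0).
Proof.
  split.
  - intros Hm. pose proof (part1 n hn Hm) as A.
    set (P := prod_from1 (n - 1) (fun j => eTxi n j)) in *.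
    set (K := powerRZ 2 (1 - Z.of_nat (ceil_half n))) in *.
    assert (HK : 0 < K) by (apply powerRZ_lt; lra).
    split.
    + exists (P / K). split.
      * destruct (Rcase_abs P) as [N|N].
        -- rewrite Rabs_left in A by lra. right. rewrite <- A. field. lra.
        -- rewrite Rabs_right in A by lra. left. rewrite A. field. lra.
      * field. lra.
    + intro Z. rewrite Z, Rabs_R0 in A. lra.
  - apply part2; assumption.
Qed.
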